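(* Let $\mathbf{J}\in\mathbb{R}^{n\times n}$ be a real symmetric matrix with zero diagonal, let $\alpha,\beta>0$, and define $\mathcal{E}(\boldsymbol{x})=-\frac12\boldsymbol{x}^\top\mathbf{J}\boldsymbol{x}$, $\mathcal{A}(\boldsymbol{x})=\frac{\beta}{4}\sum_i x_i^4-\frac{\alpha}{2}\sum_i x_i^2$ and $\mathcal{H}=\mathcal{A}+\mathcal{E}$ on $\mathbb{R}^n$. Suppose $\boldsymbol{x}^*$ is a minimizer of $\mathcal{H}$ over $\mathbb{R}^n$ and $\boldsymbol{x}^*\in\{-\lambda,\lambda\}^n$ for some $\lambda>0$. Then $\mathrm{sign}(\boldsymbol{x}^* )$ (componentwise sign) is a minimizer of $\mathcal{E}$ over $\{-1,+1\}^n$. *)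

(* Defs.v *)
From mathcomp Require Import all_boot all_order all_algebra.
From mathcomp Require Import reals.
Set Implicit Arguments. Unset Strict Implicit. Unset Printing Implicit Defensive.
Import Order.TTheory GRing.Theory Num.Theory.
Local Open Scope ring_scope.

Definition Eising (R : realType) (n : nat) (J : 'M[R]_n) (x : 'cV[R]_n) : R :=
  - (1 / 2) * (x^T *m J *m x) 0 0.

Definition Aniso (R : realType) (n : nat) (alpha beta : R) (x : 'cV[R]_n) : R :=
  beta / 4 * (\sum_(i < n) x i 0 ^+ 4) - alpha / 2 * (\sum_(i < n) x i 0 ^+ 2).

Definition Ham (R : realType) (n : nat) (J : 'M[R]_n) (alpha beta : R)
  (x : 'cV[R]_n) : R := Aniso alpha beta x + Eising J x.

Definition sgvec (R : realType) (n : nat) (x : 'cV[R]_n) : 'cV[R]_n :=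
  \col_i Num.sg (x i 0).

Definition is_spin (R : realType) (n : nat) (s : 'cV[R]_n) : Prop :=
  forall i, s i 0 = 1 \/ s i 0 = -1.

(* Main.v *)
Require Import Defs.
From mathcomp Require Import all_boot all_order all_algebra.
From mathcomp Require Import reals.
Import Order.TTheory GRing.Theory Num.Theory.
Local Open Scope ring_scope.

Lemma EisingZ (R : realType) (n : nat) (J : 'M[R]_n) (c : R) (x : 'cV[R]_n) :
  Eising J (c *: x) = c ^+ 2 * Eising J x.
Proof.
rewrite /Eising.
have -> : (c *: x)^T = c *: x^T by apply/matrixP => i j; rewrite !mxE.
rewrite -scalemxAl -scalemxAr -scalemxAl scalerA !mxE expr2.
by rewrite mulrCA mulrA. Qed.

Lemma spin_sq (R : realType) (n : nat) (s : 'cV[R]_n) (c : R) i :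
  is_spin s -> (c *: s) i 0 ^+ 2 = c ^+ 2.
Proof.
move=> /(_ i) H; rewrite mxE exprMn.
by case: H => ->; rewrite ?sqrrN expr1n mulr1.
Qed.

Lemma AnisoZ (R : realType) (n : nat) (alpha beta c : R) (s t : 'cV[R]_n) :
  is_spin s -> is_spin t -> Aniso alpha beta (c *: s) = Aniso alpha beta (c *: t).
Proof.
move=> Hs Ht; rewrite /Aniso.
have E4 : forall u : 'cV[R]_n, is_spin u -> forall i, (c *: u) i 0 ^+ 4 = c ^+ 4.
  move=> u Hu i; rewrite (_ : 4 = 2 * 2)%N // !exprM spin_sq //.
congr (_ * _ - _ * _); apply: eq_bigr => i _.
- by rewrite !E4.
- by rewrite !spin_sq.
Qed.

Theorem propositionS5 (R : realType) (n : nat) (J : 'M[R]_n) (alpha beta lambda : R)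
  (xs : 'cV[R]_n) :
  J^T = J ->
  (forall i, J i i = 0) ->
  0 < alpha -> 0 < beta ->
  (forall y : 'cV[R]_n, Ham J alpha beta xs <= Ham J alpha beta y) ->
  0 < lambda ->
  (forall i, xs i 0 = lambda \/ xs i 0 = - lambda) ->
  is_spin (sgvec xs) /\
  (forall s : 'cV[R]_n, is_spin s -> Eising J (sgvec xs) <= Eising J s).
Proof.
move=> _ _ _ _ Hmin Hl Hx.
have Hsp : is_spin (sgvec xs).
  move=> i; rewrite mxE; case: (Hx i) => ->; first by left; rewrite gtr0_sg.
  by right; rewrite sgrN gtr0_sg.
have Exs : xs = lambda *: sgvec xs.
  apply/matrixP => i j; rewrite (ord1 j) !mxE.
  case: (Hx i) => ->; first by rewrite gtr0_sg // mulr1.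
  by rewrite sgrN gtr0_sg // mulrN1.
split=> // s Hs.
have := Hmin (lambda *: s); rewrite {1}Exs /Ham (@AnisoZ _ _ alpha beta lambda _ _ Hsp Hs) lerD2l.
by rewrite !EisingZ ler_pM2l // exprn_gt0.
Qed.
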